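(* Let $S=\{R_0,\dots,R_d\}$ be a scheme on $X$, $\mathbb F$ a field, $x\in X$, $E_a^*=E_a^*(x)$, and let $\mathcal T_0$ be the $\mathbb F$-linear span of $\{E_i^*A_jE_\ell^*:R_i,R_j,R_\ell\in S\}$. If $\mathcal T_0$ is a unital $\mathbb F$-subalgebra of $M_X(\mathbb F)$, then $S$ has no bad pairs.
   Context: Let $X$ be a nonempty finite set. A scheme of class $d$ on $X$ is a partition $S=\{R_0,\dots,R_d\}$ of $X\times X$ into nonempty sets such that $R_0=\{(b,b):b\in X\}$; for each $c$ there is $c'$ with $R_{c'}=\{(f,e):(e,f)\in R_c\}$; and for all $i,j,k$ the intersection number $p_{ij}^k=|\{\ell\in X:(m,\ell)\in R_i,(\ell,n)\in R_j\}|$ does not depend on $(m,n)\in R_k$. The valency is $k_a=p_{aa'}^0$; complex product $R_aR_b=\{R_c:p_{ab}^c>0\}$. For $y\in X$, $yR_a=\{z:(y,z)\in R_a\}$. $A_a\in M_X(\mathbb F)$ is the $(0,1)$ adjacency matrix of $R_a$ and $E_a^*(y)$ is the diagonal $(0,1)$-matrix with ones exactly at positions indexed by $yR_a$. Bad pair: $(u,v)$ is a bad pair of $S$ if there exist an integer $a\ge1$ and $R_{i_b},R_{j_b},R_{\ell_b}\in S$ ($b=0,\dots,a$) with $i_0=u$, $\ell_a=v$, $k_{i_b}=k_{\ell_b}=2$ and $p_{i_bj_b}^{\ell_b}=1$ for all $b$, $\ell_c=i_{c+1}$ for $0\le c\le a-1$, and $|R_{u'}R_v|=1$. *)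

(* Defs.v *)
From mathcomp Require Import all_boot all_order all_algebra.
Set Implicit Arguments. Unset Strict Implicit. Unset Printing Implicit Defensive.
Import GRing.Theory.
Local Open Scope ring_scope.

Section Scheme.
Variables (X : finType) (d : nat) (R : 'I_d.+1 -> {set X * X}).

Definition pcount (i j : 'I_d.+1) (m n : X) : nat :=
  #|[set y : X | ((m, y) \in R i) && ((y, n) \in R j)]|.

Definition rel_transpose (c : 'I_d.+1) : {set X * X} :=
  [set e : X * X | (e.2, e.1) \in R c].

Definition is_scheme : Prop :=
  (forall i, R i != set0) /\
  (forall e : X * X, exists i, e \in R i) /\
  (forall i j, i != j -> [disjoint R i & R j]) /\
  R ord0 = [set e : X * X | e.1 == e.2] /\
  (forall c, exists c', R c' = rel_transpose c) /\
  (forall i j k m n m' n', (m, n) \in R k -> (m', n') \in R k ->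
          pcount i j m n = pcount i j m' n').

Definition tr_idx (c : 'I_d.+1) : 'I_d.+1 :=
  odflt c [pick c' | R c' == rel_transpose c].

Definition pnum (i j k : 'I_d.+1) : nat :=
  if [pick e in R k] is Some e then pcount i j e.1 e.2 else 0%N.

Definition valency (a : 'I_d.+1) : nat := pnum a (tr_idx a) ord0.

(* |R_a R_b| : number of relations R_c with p_{ab}^c > 0 *)
Definition cplx_card (a b : 'I_d.+1) : nat :=
  #|[set c : 'I_d.+1 | (0 < pnum a b c)%N]|.

Definition bad_pair (u v : 'I_d.+1) : Prop :=
  exists a : nat, (1 <= a)%N /\
  exists i j l : nat -> 'I_d.+1,
    [/\ i 0%N = u, l a = v,
        (forall b, (b <= a)%N ->
           [/\ valency (i b) = 2%N, valency (l b) = 2%N &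
               pnum (i b) (j b) (l b) = 1%N]),
        (forall c, (c < a)%N -> l c = i c.+1) &
        cplx_card (tr_idx u) v = 1%N].

(* Matrices indexed by X, via the enumeration 'I_#|X| <-> X *)
Variable F : fieldType.

Definition adjmx (a : 'I_d.+1) : 'M[F]_#|X| :=
  \matrix_(r, s) ((enum_val r, enum_val s) \in R a)%:R.

Definition dualidem (x : X) (a : 'I_d.+1) : 'M[F]_#|X| :=
  \matrix_(r, s) ((r == s) && ((x, enum_val r) \in R a))%:R.

Definition inT0 (x : X) (M : 'M[F]_#|X|) : Prop :=
  exists coef : 'I_d.+1 -> 'I_d.+1 -> 'I_d.+1 -> F,
    M = \sum_(i < d.+1) \sum_(j < d.+1) \sum_(l < d.+1)
          coef i j l *: (dualidem x i *m adjmx j *m dualidem x l).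

(* T_0 is a unital subalgebra of M_X(F) (it is a subspace by definition) *)
Definition T0_unital_subalgebra (x : X) : Prop :=
  inT0 x 1%:M /\ (forall M N, inT0 x M -> inT0 x N -> inT0 x (M *m N)).

End Scheme.

(* Main.v *)
Require Import Defs.
From mathcomp Require Import all_boot all_order all_algebra.
Set Implicit Arguments. Unset Strict Implicit. Unset Printing Implicit Defensive.
Import GRing.Theory.
Local Open Scope ring_scope.

Section Helpers.
Variables (X : finType) (d : nat) (R : 'I_d.+1 -> {set X * X}) (F : fieldType) (x : X).

Lemma mul_dual_l (i : 'I_d.+1) (M : 'M[F]_#|X|) r s :
  (dualidem R F x i *m M) r s = ((x, enum_val r) \in R i)%:R * M r s.
Proof.
rewrite !mxE (bigD1 r) //= big1 ?addr0 => [|k /negbTE nk]; rewrite !mxE.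
  by rewrite eqxx.
by rewrite eq_sym nk mul0r.
Qed.

Lemma mul_dual_r (i : 'I_d.+1) (M : 'M[F]_#|X|) r s :
  (M *m dualidem R F x i) r s = M r s * ((x, enum_val s) \in R i)%:R.
Proof.
rewrite !mxE (bigD1 s) //= big1 ?addr0 => [|k /negbTE nk]; rewrite !mxE.
  by rewrite eqxx.
by rewrite nk mulr0.
Qed.

Lemma EAE_entry i j l r s :
  (dualidem R F x i *m adjmx R F j *m dualidem R F x l) r s =
  ((x, enum_val r) \in R i)%:R * ((enum_val r, enum_val s) \in R j)%:R *
  ((x, enum_val s) \in R l)%:R.
Proof. rewrite mul_dual_r mul_dual_l mxE. by []. Qed.

Lemma inT0_inv (M : 'M[F]_#|X|) y1 z1 y2 z2 :
  inT0 R x M ->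
  (forall q, ((x, y1) \in R q) = ((x, y2) \in R q)) ->
  (forall q, ((y1, z1) \in R q) = ((y2, z2) \in R q)) ->
  (forall q, ((x, z1) \in R q) = ((x, z2) \in R q)) ->
  M (enum_rank y1) (enum_rank z1) = M (enum_rank y2) (enum_rank z2).
Proof.
move=> [coef ->] Hy Hyz Hz.
rewrite !summxE; apply: eq_bigr => i _; rewrite !summxE; apply: eq_bigr => j _.
rewrite !summxE; apply: eq_bigr => l _.
by rewrite [LHS]mxE [RHS]mxE !EAE_entry !enum_rankK Hy Hyz Hz.
Qed.

Lemma EAE_inT0 i j l : inT0 R x (dualidem R F x i *m adjmx R F j *m dualidem R F x l).
Proof.
exists (fun p q t => ((p == i) && (q == j) && (t == l))%:R).
rewrite (bigD1 i) //= [X in _ + X]big1 ?addr0 => [|p /negbTE Hp]; last first.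
  by apply: big1 => q _; apply: big1 => t _; rewrite Hp scale0r.
rewrite (bigD1 j) //= [X in _ + X]big1 ?addr0 => [|q /negbTE Hq]; last first.
  by apply: big1 => t _; rewrite Hq andbF scale0r.
rewrite (bigD1 l) //= [X in _ + X]big1 ?addr0 => [|t /negbTE Ht]; last first.
  by rewrite Ht andbF scale0r.
by rewrite !eqxx scale1r.
Qed.

End Helpers.

Fixpoint chainmx (F : fieldType) (n : nat) (B : nat -> 'M[F]_n) (k : nat) : 'M[F]_n :=
  match k with 0%N => B 0%N | k'.+1 => chainmx B k' *m B k'.+1 end.

Section Main.
Variables (X : finType) (d : nat) (R : 'I_d.+1 -> {set X * X}) (F : fieldType) (x : X).
Hypothesis Hreg : forall i j k m n m' n', (m, n) \in R k -> (m', n') \in R k ->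
          pcount R i j m n = pcount R i j m' n'.

Lemma pnum_at i j k m n : (m, n) \in R k -> pnum R i j k = pcount R i j m n.
Proof.
move=> Hmn; rewrite /pnum; case: pickP => [[e1 e2] He | Hn] /=.
  exact: Hreg He Hmn.
by move: (Hn (m, n)); rewrite Hmn.
Qed.

Lemma h_exists i j l : pnum R i j l = 1%N -> exists h : X -> X,
  forall z, (x, z) \in R l -> forall w,
    ((x, w) \in R i) && ((w, z) \in R j) = (w == h z).
Proof.
move=> Hp.
exists (fun z => odflt z [pick w | ((x, w) \in R i) && ((w, z) \in R j)]).
move=> z Hz w.
have: pcount R i j x z = 1%N by rewrite -(pnum_at i j Hz).
rewrite /pcount => /eqP /cards1P [w0 Hw0].
have Hm : forall w', ((x, w') \in R i) && ((w', z) \in R j) = (w' == w0).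
  by move=> w'; rewrite -in_set1 -Hw0 inE.
case: pickP => [w' Hw' | Hn] /=.
  by rewrite Hm; move: Hw'; rewrite Hm => /eqP ->.
by move: (Hn w0); rewrite Hm eqxx.
Qed.

Lemma bool_mul (b1 b2 : bool) : b1%:R * b2%:R = (b1 && b2)%:R :> F.
Proof. by case: b1; case: b2; rewrite ?mulr1 ?mul0r ?mulr0. Qed.

Variables (a : nat) (i j l : nat -> 'I_d.+1).
Hypothesis Hp : forall b, (b <= a)%N -> pnum R (i b) (j b) (l b) = 1%N.
Hypothesis Hlink : forall c, (c < a)%N -> l c = i c.+1.
Hypothesis Tmul : forall M N : 'M[F]_#|X|, inT0 R x M -> inT0 R x N -> inT0 R x (M *m N).

Let B b := dualidem R F x (i b) *m adjmx R F (j b) *m dualidem R F x (l b).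

Lemma chain_inv n : (n <= a)%N ->
  inT0 R x (chainmx B n) /\ exists H : X -> X,
   (forall z, (x, z) \in R (l n) -> (x, H z) \in R (i 0%N)) /\
   forall r s, chainmx B n r s =
     [&& (x, enum_val r) \in R (i 0%N), (x, enum_val s) \in R (l n) &
         enum_val r == H (enum_val s)]%:R.
Proof.
elim: n => [_ | n IH Hn].
  split; first exact: EAE_inT0.
  have [h Hh] := h_exists (Hp (leq0n a)).
  exists h; split.
    by move=> z Hz; move: (Hh z Hz (h z)); rewrite eqxx => /andP [].
  move=> r s /=; rewrite /B /= EAE_entry !bool_mul.
  case Hs: ((x, enum_val s) \in R (l 0%N)); last by rewrite !andbF.
  by rewrite andbT -(Hh _ Hs); case: ((x, enum_val r) \in R (i 0%N)).
have Hn' : (n <= a)%N by apply: ltnW.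
have [IT [H [HH HQ]]] := IH Hn'.
have Hl := Hlink Hn.
split; first by apply: Tmul => //; exact: EAE_inT0.
have [h Hh] := h_exists (Hp Hn).
exists (fun z => H (h z)); split.
  move=> z Hz; apply: HH; move: (Hh z Hz (h z)); rewrite eqxx Hl.
  by case/andP.
move=> r s /=; rewrite mxE.
case Hs: ((x, enum_val s) \in R (l n.+1)); last first.
  rewrite andbF /= big1 // => k _.
  by rewrite /B /= EAE_entry Hs (_ : false%:R = 0 :> F) // !mulr0.
rewrite (bigD1 (enum_rank (h (enum_val s)))) //= big1 ?addr0.
  rewrite /B /= EAE_entry HQ !enum_rankK Hs mulr1.
  move: (Hh _ Hs (h (enum_val s))); rewrite eqxx => /andP [H1 H2].
  by rewrite Hl H1 H2 (_ : true%:R = 1 :> F) // !mulr1.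
move=> k Hk; rewrite /B /= EAE_entry Hs (_ : true%:R = 1 :> F) // mulr1 bool_mul.
suff -> : ((x, enum_val k) \in R (i n.+1)) && ((enum_val k, enum_val s) \in R (j n.+1)) = false
  by rewrite mulr0.
rewrite (Hh _ Hs); apply/negbTE; apply: contra Hk => /eqP <-.
by rewrite enum_valK.
Qed.

End Main.

Lemma sameR (X : finType) (d : nat) (R : 'I_d.+1 -> {set X * X}) :
  (forall i j, i != j -> [disjoint R i & R j]) ->
  forall p e e', e \in R p -> e' \in R p -> forall q, (e \in R q) = (e' \in R q).
Proof.
move=> Hdis p e e' He He' q; case: (eqVneq q p) => [-> | nq]; first by rewrite He He'.
have np : p != q by rewrite eq_sym.
by rewrite (disjointFr (Hdis _ _ np) He) (disjointFr (Hdis _ _ np) He').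
Qed.

Theorem lemma4p8 (X : finType) (d : nat) (R : 'I_d.+1 -> {set X * X})
  (F : fieldType) (x : X) :
  is_scheme R -> T0_unital_subalgebra R F x ->
  forall u v : 'I_d.+1, ~ bad_pair R u v.
Proof.
move=> [Hne [Hcov [Hdis [H0 [Htr Hreg]]]]] [T1 Tmul] u v
  [a [a1 [i [j [l [Hi0 Hla Hch Hlink Hcc]]]]]].
have Hp : forall b, (b <= a)%N -> pnum R (i b) (j b) (l b) = 1%N by move=> b /Hch [].
have [IT [H [HH HQ]]] := chain_inv (F:=F) (x:=x) Hreg Hp Hlink Tmul (leqnn a).
have Hval : forall w, valency R w = 2%N -> exists2 S : {set X}, #|S| = 2%N &
    forall y, y \in S -> (x, y) \in R w.
  move=> w; rewrite /valency (@pnum_at _ _ R Hreg _ _ _ x x); last by rewrite H0 inE.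
  move=> Hc; exists [set y | ((x, y) \in R w) && ((y, x) \in R (tr_idx R w))] => //.
  by move=> y; rewrite inE => /andP [].
have [Sv Sv2 HSv] : exists2 S : {set X}, #|S| = 2%N & forall y, y \in S -> (x, y) \in R v.
  by apply: Hval; rewrite -Hla; case: (Hch a (leqnn a)).
have : (0 < #|Sv|)%N by rewrite Sv2.
rewrite card_gt0 => /set0Pn [z /HSv Hz].
rewrite -Hla in Hz.
have Hy1 := HH z Hz.
rewrite Hi0 in Hy1.
have [Su Su2 HSu] : exists2 S : {set X}, #|S| = 2%N & forall y, y \in S -> (x, y) \in R u.
  by apply: Hval; rewrite -Hi0; case: (Hch 0%N (leq0n a)).
have : (0 < #|Su :\ H z|)%N.
  move: (cardsD1 (H z) Su); rewrite Su2 => e; rewrite lt0n; apply/eqP => e0.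
  by rewrite e0 addn0 in e; case: (H z \in Su) e.
rewrite card_gt0 => /set0Pn [y2]; rewrite in_setD1 => /andP [ny2 /HSu Hy2].
have Htru : R (tr_idx R u) = rel_transpose R u.
  rewrite /tr_idx; case: pickP => [c /eqP // | Hn].
  by have [c' Hc'] := Htr u; move: (Hn c'); rewrite Hc' eqxx.
have [c1 Hc1] := Hcov (H z, z).
have [c2 Hc2] := Hcov (y2, z).
rewrite Hla in Hz.
have Cin : forall y c, (x, y) \in R u -> (y, z) \in R c ->
    c \in [set c | (0 < pnum R (tr_idx R u) v c)%N].
  move=> y c Hy Hyz; rewrite inE (@pnum_at _ _ R Hreg _ _ _ _ _ Hyz) /pcount card_gt0.
  by apply/set0Pn; exists x; rewrite inE Htru inE /= Hy Hz.
move/eqP/cards1P: Hcc => [c0 Hc0].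
have := Cin _ _ Hy1 Hc1; have := Cin _ _ Hy2 Hc2.
rewrite Hc0 !in_set1 => /eqP e2 /eqP e1.
rewrite e1 in Hc1; rewrite e2 in Hc2.
have Heq := inT0_inv IT (sameR Hdis Hy1 Hy2) (sameR Hdis Hc1 Hc2) (fun q => erefl).
move: Heq; rewrite !HQ !enum_rankK Hla Hz Hi0 Hy2 Hy1 eqxx (negbTE ny2) /=.
by move/eqP; rewrite oner_eq0.
Qed.
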